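(* Let $T\ge 1$ be an integer and $p^*\in(0,1]$. For integers $l\ge1$ and $0\le n\le l-1$ with $l-n\le T$ put $P^l_D(n)=\frac{\prod_{i=0}^{l-n-1}(1-\frac{i}{T})}{T^{n}}$. For $l\ge1$ let $n^*_l$ be the least $n\in\{0,\dots,l-1\}$ with $P^l_D(n)\le p^*$, if such $n$ exists (otherwise $n^*_l$ is undefined). Let $l_{max}$ be the least $l\in\{1,\dots,T\}$ with $P^l_D(0)\le p^*$, and assume $l_{max}\le \lfloor T-\sqrt{T}\rfloor+1$. Then for every $l$ with $2\le l\le l_{max}$ such that $n^*_{l-1}$ is defined, $n^*_l$ is defined and $n^*_{l-1}\le n^*_l+1$.
   Context: $p^*$ is the threshold probability for a random device to share a given device ID. *)

(* Defs.v *)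
From HB Require Import structures.
From mathcomp Require Import all_boot all_order all_algebra.
From mathcomp Require Import reals.
Set Implicit Arguments. Unset Strict Implicit. Unset Printing Implicit Defensive.
Import Order.TTheory GRing.Theory Num.Theory.
Local Open Scope ring_scope.

Definition PD (R : realType) (T l n : nat) : R :=
  (\prod_(i < l - n) (1 - (i : nat)%:R / T%:R)) / (T%:R ^+ n).

Definition PD_dom (T l n : nat) : Prop := (n < l)%N /\ (l - n <= T)%N.

Definition is_nstar (R : realType) (T : nat) (pstar : R) (l n : nat) : Prop :=
  PD_dom T l n /\ PD R T l n <= pstar /\
  (forall m : nat, (m < n)%N -> PD_dom T l m -> ~ (PD R T l m <= pstar)).

Definition is_lmax (R : realType) (T : nat) (pstar : R) (lm : nat) : Prop :=
  (1 <= lm <= T)%N /\ PD R T lm 0 <= pstar /\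
  (forall l : nat, (1 <= l)%N -> (l < lm)%N -> ~ (PD R T l 0 <= pstar)).

(* Main.v *)
Require Import Defs.
From HB Require Import structures.
From mathcomp Require Import all_boot all_order all_algebra.
From mathcomp Require Import reals.
From mathcomp Require Import zify ring lra.
Import Order.TTheory GRing.Theory Num.Theory.
Local Open Scope ring_scope.

Lemma PD_step (R : realType) (T l m k : nat) : (1 <= T)%N ->
  (l - m = k.+2)%N ->
  PD R T l m = PD R T l.-1 m.+1 *
     (T%:R * (1 - k%:R / T%:R) * (1 - k.+1%:R / T%:R)).
Proof.
move=> T1 E; have E2 : (l.-1 - m.+1 = k)%N by lia.
rewrite /PD E E2 !big_ord_recr /= exprS.
set P := \prod_(i < k) _.
have T0 : (T%:R : R) != 0 by rewrite pnatr_eq0 -lt0n.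
field; rewrite ?T0 ?expf_neq0 //.
Qed.

Lemma factor_ge1 (R : realType) (T k : nat) :
  (1 <= T)%N -> (k.+1)%:R <= T%:R - Num.sqrt (T%:R : R) ->
  1 <= T%:R * (1 - k%:R / T%:R) * (1 - k.+1%:R / T%:R) :> R.
Proof.
move=> T1 H.
have s0 : 0 <= Num.sqrt (T%:R : R) := sqrtr_ge0 _.
have s2 : Num.sqrt (T%:R : R) ^+ 2 = T%:R by rewrite sqr_sqrtr.
have Tp : (0 : R) < T%:R by rewrite ltr0n.
have -> : T%:R * (1 - k%:R / T%:R) * (1 - k.+1%:R / T%:R)
   = (T%:R - k%:R) * (T%:R - k.+1%:R) / (T%:R : R).
  by field; rewrite gt_eqF.
rewrite ler_pdivlMr // mul1r.
move: H s2; rewrite -natr1 => H s2.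
set s := Num.sqrt _ in H s0 s2 *.
set a := (k%:R : R) in H *; set t := (T%:R : R) in H s2 Tp *.
nra.
Qed.

Theorem corollary1 (R : realType) (T : nat) (pstar : R) (lmax : nat) :
  (1 <= T)%N -> 0 < pstar -> pstar <= 1 ->
  is_lmax T pstar lmax ->
  (lmax%:Z <= Num.floor (T%:R - Num.sqrt (T%:R : R)) + 1)%R ->
  forall l : nat, (2 <= l)%N -> (l <= lmax)%N ->
  forall n1 : nat, is_nstar T pstar l.-1 n1 ->
  exists n2 : nat, is_nstar T pstar l n2 /\ (n1 <= n2 + 1)%N.
Proof.
move=> T1 p0 p1 [lmT [Plm minlm]] Hfl l l2 llm n1 [[dn1a dn1b] [Pn1 minn1]].
have Hl : (l.-1)%:R <= T%:R - Num.sqrt (T%:R : R).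
  have : ((l.-1)%:Z <= Num.floor (T%:R - Num.sqrt (T%:R : R)))%R.
    have : ((l.-1)%:Z <= lmax%:Z - 1)%R by lia.
    move=> h; apply: le_trans h _; by rewrite lerBlDr.
  by rewrite floor_ge_int.
have key : forall m, (m.+1 < n1)%N -> PD_dom T l m -> ~ PD R T l m <= pstar.
  move=> m mn [dm1 dm2] HP.
  have E : (l - m = (l - m - 2).+2)%N by lia.
  rewrite (@PD_step R T l m _ T1 E) in HP.
  have hlt : pstar < PD R T l.-1 m.+1.
    rewrite ltNge; apply/negP; apply: minn1 => //; split; lia.
  have f1 := @factor_ge1 R T (l - m - 2) T1.
  have : 1 <= T%:R * (1 - (l - m - 2)%:R / T%:R) * (1 - (l - m - 2).+1%:R / T%:R) :> R.
    apply: f1; apply: le_trans Hl; rewrite ler_nat; lia.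
  move=> hf.
  have : PD R T l.-1 m.+1 <= PD R T l.-1 m.+1 * (T%:R * (1 - (l - m - 2)%:R / T%:R) * (1 - (l - m - 2).+1%:R / T%:R)).
    rewrite ler_peMr //; apply: ltW; exact: lt_trans hlt.
  move=> h2; have := le_lt_trans (le_trans h2 HP) hlt; by rewrite ltxx.
pose P n := [&& (n < l)%N, (l - n <= T)%N & PD R T l n <= pstar].
have exP : exists n, P n.
  exists n1.+1; rewrite /P; apply/and3P; split; try lia.
  have -> : PD R T l n1.+1 = PD R T l.-1 n1 / T%:R.
    rewrite /PD; have -> : (l - n1.+1 = l.-1 - n1)%N by lia.
    by rewrite exprS invfM mulrA mulrAC.
  apply: (@le_trans _ _ (PD R T l.-1 n1)); last exact: Pn1; rewrite ler_pdivrMr ?ltr0n //.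
  rewrite ler_peMr ?ler1n //; rewrite /PD divr_ge0 ?exprn_ge0 ?ler0n //.
  apply: prodr_ge0 => i _; rewrite subr_ge0 ler_pdivrMr ?ltr0n // mul1r ler_nat.
  have := ltn_ord i; lia.
case: (ex_minnP exP) => n2 /and3P [h1 h2 h3] hmin.
exists n2; split.
  split; first by split.
  split => // m mn [d1 d2] hm.
  have : (n2 <= m)%N by apply: hmin; apply/and3P.
  lia.
rewrite leqNgt; apply/negP => hc.
apply: (key n2); [lia | split => // | exact: h3].
Qed.
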